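(* Let $n\ge1$, $b\in\mathbb{Z}$, $P_b:\{0,1,\dots,2^n\}\to\mathbb{Z}$, $d(x)=P_b(x)-bx$, let $\epsilon_0$ be the fraction of $x\in D_n$ with $d(x)\ne0$, let $\beta>0$ and $0<\alpha<1$. Assume that the fraction of $x\in D_n$ with $d(x)>0$ and the fraction with $d(x)<0$ are each greater than $\epsilon_0/2-\beta$. If $x\in D_n$ is good, then RandSplit$(x,b,P_b)$ outputs FAIL with probability at least $\epsilon_0/2-\beta-\frac1\alpha(\epsilon_0/2)^2$.
   Context: $D_n=\{0,1,\dots,2^n-1\}$; Rand$(0,2^n)$ is a uniformly random element of $D_n$. For $x,x_1\in D_n$, $\delta_x(x_1)=1$ if $d(x_1)>0$ and $d((x-x_1)\bmod 2^n)<0$, and $\delta_x(x_1)=0$ otherwise; the number of opposite-sign matches of $x$ is $\sum_{x_1\in D_n}\delta_x(x_1)$, and $x$ is good if this number is at most $\frac1\alpha(\epsilon_0/2)^2 2^n$. RandSplit$(x,b,P)$: choose $x_1\leftarrow$ Rand$(0,2^n)$; set $\delta=0$ if $x_1<x$ and $\delta=1$ otherwise; set $x_2=\delta\cdot 2^n+x-x_1$; if $P(x_1)+P(x_2)\ne b\cdot\delta\cdot 2^n+P(x)$ return FAIL, else return PASS. *)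

(* Defs.v *)
From HB Require Import structures.
From mathcomp Require Import all_boot all_order all_algebra.
Set Implicit Arguments. Unset Strict Implicit. Unset Printing Implicit Defensive.
Import Order.TTheory GRing.Theory Num.Theory.
Local Open Scope ring_scope.

(* D_n = {0,...,2^n - 1} is represented by iota 0 (2^n).
   P : nat -> int; only its values on {0,...,2^n} are ever used. *)

Definition dev (b : int) (P : nat -> int) (x : nat) : int := P x - b * x%:Z.

Definition cntD (n : nat) (p : pred nat) : nat := count p (iota 0 (2 ^ n)).

Definition fracD (R : realFieldType) (n : nat) (p : pred nat) : R :=
  (cntD n p)%:R / (2 ^ n)%:R.

Definition eps0 (R : realFieldType) (n : nat) (b : int) (P : nat -> int) : R :=
  fracD R n (fun x => dev b P x != 0).

(* number of opposite-sign matches of x: #{x1 in D_n | d(x1) > 0 /\ d((x - x1) mod 2^n) < 0}.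
   For x, x1 in D_n, (x - x1) mod 2^n (integer mod) equals (x + 2^n - x1) %% 2^n in nat. *)
Definition opp_matches (n : nat) (b : int) (P : nat -> int) (x : nat) : nat :=
  cntD n (fun x1 => (0 < dev b P x1) && (dev b P ((x + 2 ^ n - x1) %% 2 ^ n)%N < 0)).

Definition good (R : realFieldType) (n : nat) (b : int) (P : nat -> int)
  (alpha : R) (x : nat) : Prop :=
  (opp_matches n b P x)%:R <= alpha^-1 * (eps0 R n b P / 2) ^+ 2 * (2 ^ n)%:R.

Definition randsplit_fails (n : nat) (b : int) (P : nat -> int) (x x1 : nat) : bool :=
  let delta : nat := if (x1 < x)%N then 0%N else 1%N in
  let x2 : nat := (delta * 2 ^ n + x - x1)%N in
  P x1 + P x2 != b * (delta * 2 ^ n)%N%:Z + P x.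

Definition fail_prob (R : realFieldType) (n : nat) (b : int) (P : nat -> int) (x : nat) : R :=
  fracD R n (randsplit_fails n b P x).

(* Main.v *)
Require Import Defs.
From HB Require Import structures.
From mathcomp Require Import all_boot all_order all_algebra zify.
Import Order.TTheory GRing.Theory Num.Theory.
Local Open Scope ring_scope.

Lemma count_or (T : eqType) (a b c : pred T) (s : seq T) :
  (forall i, i \in s -> a i -> b i || c i) -> (count a s <= count b s + count c s)%N.
Proof.
elim: s => //= y s IH H.
have IH' := IH (fun i hi => H i (mem_behead (s:=y::s) hi)).
have := H y (mem_head _ _).
case: (a y); case: (b y); case: (c y) => //= H1; try (have := H1 isT); rewrite /= ?add0n ?add1n; lia.
Qed.

Lemma fmod (N x y : nat) : (x < N)%N -> (y < N)%N ->
  ((x + N - y) %% N = if (y <= x)%N then x - y else x + N - y)%N.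
Proof.
move=> hx hy; case: leqP => h.
  rewrite -addnBAC // modnDr modn_small //; lia.
rewrite modn_small //; lia.
Qed.

Lemma count_inv (N : nat) (f : nat -> nat) (p : pred nat) :
  (forall y, (y < N)%N -> (f y < N)%N) -> (forall y, (y < N)%N -> f (f y) = y) ->
  count (fun y => p (f y)) (iota 0 N) = count p (iota 0 N).
Proof.
move=> hf hff.
rewrite -(count_map f p).
apply/(@permP _ (map f (iota 0 N)) (iota 0 N)); apply: uniq_perm.
- rewrite map_inj_in_uniq ?iota_uniq // => u v; rewrite !mem_iota /= !add0n => hu hv e.
  by rewrite -(hff u hu) e hff.
- exact: iota_uniq.
move=> z; rewrite mem_iota /= add0n; apply/mapP/idP.
  by case=> w; rewrite mem_iota /= add0n => hw ->; apply: hf.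
by move=> hz; exists (f z); rewrite ?mem_iota /= ?add0n ?hf ?hff.
Qed.
From mathcomp Require Import ring.

Lemma finv (N x y : nat) : (x < N)%N -> (y < N)%N ->
  ((x + N - (x + N - y) %% N) %% N = y)%N.
Proof.
move=> hx hy; rewrite (fmod _ _ _ hx hy); case: (leqP y x) => h.
  rewrite fmod; [|done|lia]; case: leqP => h2; lia.
rewrite fmod; [|done|lia]; case: leqP => h2; lia.
Qed.

Lemma pass_eq n b P x x1 : (x < 2 ^ n)%N -> (x1 < 2 ^ n)%N -> x1 != x ->
  ~~ randsplit_fails n b P x x1 ->
  dev b P x1 + dev b P ((x + 2 ^ n - x1) %% 2 ^ n)%N = dev b P x.
Proof.
move=> hx hx1 hne; rewrite /randsplit_fails negbK => /eqP E.
set N := (2 ^ n)%N in hx hx1 E *.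
set D := ((if (x1 < x)%N then 0%N else 1%N) * N)%N in E.
set x2 := (D + x - x1)%N in E.
have -> : ((x + N - x1) %% N)%N = x2.
  rewrite fmod // /x2 /D; case: (ltnP x1 x) => h; case: leqP => h2; lia.
have h : (x1 + x2 = D + x)%N by rewrite /x2 /D; case: (ltnP x1 x) => h; lia.
have h' : x1%:Z + x2%:Z = D%:Z + x%:Z by rewrite -!PoszD h.
rewrite /dev.
transitivity (P x1 + P x2 - b * (x1%:Z + x2%:Z)); first ring.
rewrite E h'; ring.
Qed.

Lemma key n b P x : (x < 2 ^ n)%N ->
  leq (cntD n (fun y => dev b P y < 0)) (cntD n (randsplit_fails n b P x) + opp_matches n b P x)
  \/ leq (cntD n (fun y => 0 < dev b P y)) (cntD n (randsplit_fails n b P x) + opp_matches n b P x).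
Proof.
move=> hx; rewrite /opp_matches /cntD.
set N := (2 ^ n)%N in hx *.
have hN : (0 < N)%N by rewrite expn_gt0.
case: (lerP 0 (dev b P x)) => hd; [left|right].
  rewrite -(@count_inv N (fun y => (x + N - y) %% N)%N (fun x1 => (0 < dev b P x1) && (dev b P ((x + N - x1) %% N)%N < 0))); last first.
  - by move=> y hy; apply: finv.
  - by move=> y hy; rewrite ltn_pmod.
  apply: count_or => i; rewrite mem_iota /= add0n => hi hneg.
  case hf: (randsplit_fails n b P x i) => //=.
  have hne : i != x by apply/eqP => e; move: hneg; rewrite e; apply/negP; rewrite -leNgt.
  have := pass_eq _ _ _ _ _ hx hi hne (negbT hf).
  rewrite finv // hneg andbT => E; move: E; rewrite -/N => E; lia.
apply: count_or => i; rewrite mem_iota /= add0n => hi hpos.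
case hf: (randsplit_fails n b P x i) => //=.
have hne : i != x by apply/eqP => e; move: hpos; rewrite e; apply/negP; rewrite -leNgt ltW.
have := pass_eq _ _ _ _ _ hx hi hne (negbT hf).
rewrite -/N hpos /= => E; lia.
Qed.
From mathcomp Require Import lra.

Theorem mainTheorem8 (R : realFieldType) (n : nat) (b : int) (P : nat -> int)
    (beta alpha : R) (x : nat) :
  (1 <= n)%N ->
  0 < beta -> 0 < alpha -> alpha < 1 ->
  eps0 R n b P / 2 - beta < fracD R n (fun y => 0 < dev b P y) ->
  eps0 R n b P / 2 - beta < fracD R n (fun y => dev b P y < 0) ->
  (x < 2 ^ n)%N ->
  good n b P alpha x ->
  eps0 R n b P / 2 - beta - alpha^-1 * (eps0 R n b P / 2) ^+ 2 <= fail_prob R n b P x.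
Proof.
move=> _ _ _ _ hA hB hx; rewrite /good /fail_prob /fracD in hA hB *.
set e := eps0 R n b P in hA hB *.
set c := alpha^-1 * (e / 2) ^+ 2.
set Nr := ((2 ^ n)%N)%:R : R.
have hN : 0 < Nr by rewrite ltr0n expn_gt0.
move=> hg.
set F := cntD n (randsplit_fails n b P x).
rewrite ler_pdivlMr //.
move: hA hB; rewrite !ltr_pdivlMr // => hA hB.
have hM : (opp_matches n b P x)%:R <= c * Nr by [].
move: hA hB; rewrite -/Nr => hA hB; case: (key n b P x hx) => h; move: h; rewrite -(@ler_nat R) natrD -/F => h; rewrite mulrBl; lra.
Qed.
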